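(* Let $m\ge3$ be odd, $n\ge 0$ an integer, $h=8(m-2)n+3(m-4)^2$, and $\bm d=(d_1,d_2,d_3)\in\mathbb{N}^3$. Let $p$ be an odd prime with $p\mid(m-2)$. Then \[ b_p(h,\lambda_{\bm d},0)=\begin{cases} p^{\mathrm{ord}_p(m-2)+\min_j\{\mathrm{ord}_p(d_j)\}} & \text{if } n\in\gcd(d_1,d_2,d_3)\mathbb{Z}_p,\\ 0&\text{otherwise.}\end{cases} \]
   Context: $V$ is the ternary quadratic space over $\mathbb{Q}$ with basis $e_1,e_2,e_3$, $B(e_i,e_j)=4(m-2)^2\delta_{ij}$, $Q(x)=B(x,x)$; $L^{\bm d}=\mathbb{Z}d_1e_1+\mathbb{Z}d_2e_2+\mathbb{Z}d_3e_3$, $\nu=\frac{4-m}{2(m-2)}(e_1+e_2+e_3)$, $X^{\bm d}=L^{\bm d}+\nu$, and $\lambda_{\bm d}$ is the characteristic function of $X^{\bm d}$. For $z\in\mathbb{Q}_p$, $\bm e_p(z)=e^{-2\pi i y}$ where $y\in\bigcup_{t\ge1}p^{-t}\mathbb{Z}$ satisfies $z-y\in\mathbb{Z}_p$. With Haar measures $dv$ on $L^{\bm d}_p=L^{\bm d}\otimes\mathbb{Z}_p$ and $d\sigma$ on $\mathbb{Q}_p$ normalized so that $L^{\bm d}_p$ and $\mathbb{Z}_p$ have volume $1$, the local density is \[ b_p(h,\lambda_{\bm d},0)=\int_{\mathbb{Q}_p}\int_{L^{\bm d}_p}\bm e_p\big(\sigma(Q(v+\nu)-h)\big)\,dv\,d\sigma.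 \] *)

(* Defs.v *)
From mathcomp Require Import all_boot all_algebra.
From mathcomp Require Import all_classical all_reals all_analysis.
From mathcomp.real_closed Require Import complex.

Set Implicit Arguments.
Unset Strict Implicit.
Unset Printing Implicit Defensive.

Import GRing.Theory Num.Theory numFieldNormedType.Exports.
Local Open Scope ring_scope.
Local Open Scope classical_set_scope.

(* The p-adic additive character restricted to rationals.                    *)
(* For z in Q, write z = u / (p^k * w) with p coprime to w.  Then            *)
(* y := ((u * w') mod p^k) / p^k, where w * w' = 1 mod p^k, lies in Z[1/p]   *)
(* (indeed in p^-k Z) and satisfies z - y in Z_p.  Any two such y differ by  *)
(* an integer, so e_p(z) = exp(-2 pi i y) is well defined.                   *)
Definition ep_frac (p : nat) (z : rat) : rat :=
  let u := numq z in
  let den := `|denq z|%N in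
  let k := logn p den in
  let w := (den %/ p ^ k)%N in
  let w' := (egcdn w (p ^ k)).1 in
  ((intdiv.modz (u * w'%:Z) (p ^ k)%:Z)%:~R) / (p ^ k)%:R.

Definition ep (R : realType) (p : nat) (z : rat) : R[i] :=
  let y : R := ratr (ep_frac p z) in
  (cos (2 * pi * y) -i* sin (2 * pi * y))%C.

(* Quadratic form Q(x) = B(x,x), B(e_i,e_j) = 4(m-2)^2 delta_ij, in the      *)
(* coordinates of the basis e_1, e_2, e_3.                                  *)
Definition Qform (m : nat) (y1 y2 y3 : rat) : rat :=
  4 * (m%:R - 2) ^+ 2 * (y1 ^+ 2 + y2 ^+ 2 + y3 ^+ 2).

(* Common coordinate of nu = (4-m)/(2(m-2)) (e_1 + e_2 + e_3). *)
Definition nu_coord (m : nat) : rat := (4 - m%:R) / (2 * (m%:R - 2)).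

Definition hval (m n : nat) : rat :=
  8 * (m%:R - 2) * n%:R + 3 * (m%:R - 4) ^+ 2.

(* Q(v + nu) - h for v = x1 d1 e1 + x2 d2 e2 + x3 d3 e3. *)
Definition Fval (m n d1 d2 d3 : nat) (x1 x2 x3 : nat) : rat :=
  Qform m (d1%:R * x1%:R + nu_coord m) (d2%:R * x2%:R + nu_coord m)
          (d3%:R * x3%:R + nu_coord m) - hval m n.

(* Truncated local density:                                                  *)
(*   I_t = \int_{p^{-t} Z_p} \int_{L^d_p} e_p(sigma (Q(v+nu) - h)) dv dsigma. *)
(* Since Q(v+nu) - h is p-integral on L^d_p, the integrand is constant on    *)
(* the cosets (a/p^t + Z_p) x (x + p^t Z_p^3), each of measure p^{-3t}       *)
(* (dv normalised so that L^d_p = Z_p d1 e1 + Z_p d2 e2 + Z_p d3 e3 has      *)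
(* volume 1, dsigma so that Z_p has volume 1).                               *)
Definition trunc_density (R : realType) (p m n d1 d2 d3 t : nat) : R[i] :=
  \sum_(a < p ^ t) \sum_(x1 < p ^ t) \sum_(x2 < p ^ t) \sum_(x3 < p ^ t)
     ((((p ^ (3 * t))%:R : R)^-1)%:C
       * ep R p ((a%:R / (p ^ t)%:R) * Fval m n d1 d2 d3 x1 x2 x3))%C.

(* b_p(h, lambda_d, 0) = lim_{t -> oo} I_t ;  "b_p = c" is expressed as the  *)
(* convergence of I_t to c in C (real and imaginary parts).                  *)
Definition density_is (R : realType) (p m n d1 d2 d3 : nat) (c : R[i]) : Prop :=
  (fun t => @complex.Re R (trunc_density R p m n d1 d2 d3 t)) @ \oo --> (@complex.Re R c : R) /\
  (fun t => @complex.Im R (trunc_density R p m n d1 d2 d3 t)) @ \oo --> (@complex.Im R c : R).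

(* Main.v *)
Require Import Defs.
From mathcomp Require Import all_boot all_algebra.
From mathcomp Require Import all_classical all_reals all_analysis.
From mathcomp.real_closed Require Import complex.
From mathcomp Require Import zify ring lra.
Import GRing.Theory Num.Theory numFieldNormedType.Exports.
Lemma periodic_iter (g : nat -> nat) b : (forall x, g (x + b)%N = g x) ->
  forall a x, g (x + a * b)%N = g x.
Proof.
move=> gP; elim=> [|a IH] x; first by rewrite mul0n addn0.
by rewrite mulSn addnA IH gP.
Qed.

Lemma sum_period (g : nat -> nat) a b : (forall x, g (x + b)%N = g x) ->
  (\sum_(0 <= x < a * b) g x = a * \sum_(0 <= x < b) g x)%N.
Proof.
move=> gP; elim: a => [|a IH]; first by rewrite !mul0n big_geq.
rewrite mulSnr (@big_cat_nat _ _ _ (a * b)) //= ?leq_addr // IH.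
rewrite -{1}[(a * b)%N]add0n big_addn addKn mulSnr; congr (_ + _)%N.
by apply: eq_bigr => i _; rewrite periodic_iter.
Qed.

Local Open Scope ring_scope.

Lemma modz_nat_lt (N : nat) (z : int) : (0 < N)%N -> (`|(z %% N)%Z|%N < N)%N.
Proof.
move=> N0; have h1 := @ltz_pmod z N; have h2 := @modz_ge0 z N.
have : (0 < N%:Z)%R by rewrite ltz_nat.
move=> /h1 {}h1. have : N%:Z != 0 by rewrite eqz_nat -lt0n.
move=> /h2 {}h2. lia.
Qed.

Lemma modz_nat_eq (N : nat) (a b : int) : (0 < N)%N ->
  (`|(a %% N)%Z|%N == `|(b %% N)%Z|%N) = (N%:Z %| a - b)%Z.
Proof.
move=> N0; rewrite -eqz_mod_dvd.
have : N%:Z != 0 by rewrite eqz_nat -lt0n.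
move=> /[dup] /(@modz_ge0 a) h1 /(@modz_ge0 b) h2.
apply/eqP/eqP; lia.
Qed.

Lemma count_one (N : nat) (f : nat -> int) (c : int) : (0 < N)%N ->
  (forall x y, (x < N)%N -> (y < N)%N -> (N%:Z %| f x - f y)%Z -> x = y) ->
  (\sum_(x < N) ((N%:Z %| (f x + c)%R)%Z : nat))%N = 1%N.
Proof.
move=> N0 inj.
pose h (x : 'I_N) : 'I_N := Ordinal (@modz_nat_lt N (f x) N0).
have injh : injective h.
  move=> x y /(congr1 val) /= /eqP; rewrite modz_nat_eq // => /(inj _ _ (ltn_ord x) (ltn_ord y)).
  by move=> /val_inj.
pose y0 : 'I_N := Ordinal (@modz_nat_lt N (- c) N0).
have : y0 \in codom h by apply: inj_card_onto.
case/codomP => x0 hx0.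
rewrite (bigD1 x0) //= big1 ?addn0.
  suff -> : (N%:Z %| f x0 + c)%Z by [].
  by rewrite -[c]opprK -modz_nat_eq // -[X in X == _]/(val (h x0)) -hx0.
move=> x /negbTE xx0.
have -> : (N%:Z %| f x + c)%Z = (h x == h x0).
  by rewrite -hx0 -val_eqE /= modz_nat_eq // opprK.
by rewrite (inj_eq injh) xx0.
Qed.

Definition Qp (m : nat) (y : int) : int := y * ((m%:Z - 2) * y - (m%:Z - 4)).

Lemma m2E (m : nat) : (2 <= m)%N -> (m%:Z - 2) = (m - 2)%N%:Z.
Proof. by move=> h; rewrite -subzn. Qed.

Lemma dvd_m2 (m p : nat) : (2 <= m)%N -> (p %| m - 2)%N -> (p%:Z %| m%:Z - 2)%Z.
Proof. by move=> h1 h2; rewrite m2E // dvdzE. Qed.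

Lemma W_coprime (m p : nat) (z : int) : prime p -> odd p -> (p %| m - 2)%N -> (3 <= m)%N ->
  coprimez (p%:Z) ((m%:Z - 2) * z - (m%:Z - 4)).
Proof.
move=> pr op pm m3; rewrite coprimezE /= prime_coprime //; apply/negP => H.
have H1 : (p%:Z %| (m%:Z - 2) * z - (m%:Z - 4))%Z by rewrite dvdzE.
have H2 : (p%:Z %| (m%:Z - 2) * (z - 1))%Z by apply: dvdz_mulr; apply: dvd_m2 => //; lia.
have : (p%:Z %| ((m%:Z - 2) * z - (m%:Z - 4)) - (m%:Z - 2) * (z - 1))%Z by rewrite rpredB.
have -> : ((m%:Z - 2) * z - (m%:Z - 4)) - (m%:Z - 2) * (z - 1) = 2 by ring.
rewrite dvdzE /= => /dvdn_leq => /(_ isT) => hp2.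
have := prime_gt1 pr; move: op; case: p {pr pm H H1 H2} hp2 => [|[|[|]]] //.
Qed.

Lemma small_dvd (P x y : nat) : (x < P)%N -> (y < P)%N -> (P%:Z %| x%:Z - y%:Z)%Z -> x = y.
Proof.
move=> xP yP; rewrite dvdzE /= => H.
case: (eqVneq x y) => // nxy.
have h0 : (0 < `|x%:Z - y%:Z|)%N by lia.
have := dvdn_leq h0 H. lia.
Qed.

Lemma core (m p D t s : nat) (c : int) : prime p -> odd p -> (p %| m - 2)%N -> (3 <= m)%N ->
  (0 < D)%N ->
  ((p ^ logn p D)%N%:Z %| c)%Z -> (logn p D <= s)%N -> (s <= t)%N ->
  (\sum_(x < p ^ t) (((p ^ s)%N%:Z %| (Qp m (D%:Z * x%:Z) + c)%R)%Z : nat))%N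
   = (p ^ (t - s + logn p D))%N.
Proof.
move=> pr op pm m3 D0 hc es st.
have [D' copD' DE] := pfactor_coprime pr D0.
case/dvdzP: hc => c' ->.
pose e := logn p D.
pose r := (s - e)%N.
pose A := (m%:Z - 2) * D%:Z.
pose f (x : nat) : int := D'%:Z * x%:Z * (A * x%:Z - (m%:Z - 4)).
have P0 : (0 < p ^ r)%N by rewrite expn_gt0 prime_gt0.
have pe0 : (0 < p ^ e)%N by rewrite expn_gt0 prime_gt0.
have eqc : forall x : nat, ((p ^ s)%N%:Z %| Qp m (D%:Z * x%:Z) + c' * (p ^ e)%N%:Z)%Z
    = ((p ^ r)%N%:Z %| f x + c')%Z.
  move=> x.
  have -> : (p ^ s)%N = (p ^ e * p ^ r)%N by rewrite -expnD subnKC.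
  rewrite PoszM.
  have -> : Qp m (D%:Z * x%:Z) + c' * (p ^ e)%N%:Z = (p ^ e)%N%:Z * (f x + c').
    by rewrite /Qp /f /A DE PoszM; ring.
  by rewrite dvdz_mul2l //; lia.
rewrite (eq_bigr (fun x : 'I_(p ^ t) => nat_of_bool ((p ^ r)%N%:Z %| f x + c')%Z)); last by move=> x _; rewrite eqc.
rewrite -(big_mkord xpredT (fun x => nat_of_bool ((p ^ r)%N%:Z %| f x + c')%Z)).
have -> : (p ^ t)%N = (p ^ (t - r) * p ^ r)%N by rewrite -expnD subnK //; lia.
rewrite sum_period; last first.
  move=> x; congr nat_of_bool.
  have -> : f (x + p ^ r)%N + c' = (f x + c') + (p ^ r)%N%:Z * (D'%:Z * (A * (2 * x%:Z + (p ^ r)%N%:Z) - (m%:Z - 4))).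
    by rewrite /f PoszD; ring.
  by rewrite rpredDr // dvdz_mulr // dvdzz.
rewrite big_mkord count_one //; last first.
  move=> x y xP yP.
  have -> : f x - f y = D'%:Z * ((x%:Z - y%:Z) * ((m%:Z - 2) * (D%:Z * (x%:Z + y%:Z)) - (m%:Z - 4))).
    by rewrite /f /A; ring.
  rewrite Gauss_dvdzr; last by rewrite coprimezE /= coprimeXl.
  rewrite Gauss_dvdzl; last first.
    by have := W_coprime m p (D%:Z * (x%:Z + y%:Z)) pr op pm m3; rewrite !coprimezE /=; apply: coprimeXl.
  exact: small_dvd.
rewrite muln1; congr (p ^ _)%N; lia.
Qed.

Definition Gint (m n d1 d2 d3 x1 x2 x3 : nat) : int :=
  Qp m (d1%:Z * x1%:Z) + Qp m (d2%:Z * x2%:Z) + Qp m (d3%:Z * x3%:Z) - 2 * n%:Z.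

Definition cntG (m n p s t d1 d2 d3 : nat) : nat :=
  (\sum_(x1 < p ^ t) \sum_(x2 < p ^ t) \sum_(x3 < p ^ t)
     (((p ^ s)%N%:Z %| Gint m n d1 d2 d3 x1 x2 x3)%Z : nat))%N.

Lemma dvd_Qp m p d (x : nat) e : prime p -> (0 < d)%N -> (e <= logn p d)%N ->
  ((p ^ e)%N%:Z %| Qp m (d%:Z * x%:Z))%Z.
Proof.
move=> pr d0 ed; rewrite /Qp; apply: dvdz_mulr; apply: dvdz_mulr.
by rewrite dvdzE /= pfactor_dvdn.
Qed.

Lemma cnt_min3 m n p s t d1 d2 d3 : prime p -> odd p -> (p %| m - 2)%N -> (3 <= m)%N ->
  (0 < d1)%N -> (0 < d2)%N -> (0 < d3)%N ->
  (logn p d3 <= logn p d1)%N -> (logn p d3 <= logn p d2)%N ->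
  (p ^ logn p d3 %| n)%N -> (logn p d3 <= s)%N -> (s <= t)%N ->
  cntG m n p s t d1 d2 d3 = (p ^ t * (p ^ t * p ^ (t - s + logn p d3)))%N.
Proof.
move=> pr op pm m3 d10 d20 d30 l1 l2 hn es st.
rewrite /cntG.
rewrite (eq_bigr (fun _ => (p ^ t * p ^ (t - s + logn p d3))%N)) ?sum_nat_const ?card_ord //.
move=> x1 _.
rewrite (eq_bigr (fun _ => (p ^ (t - s + logn p d3))%N)) ?sum_nat_const ?card_ord //.
move=> x2 _.
pose c := Qp m (d1%:Z * x1%:Z) + Qp m (d2%:Z * x2%:Z) - 2 * n%:Z.
rewrite -(@core m p d3 t s c) //; last first.
  rewrite /c rpredB ?rpredD ?dvd_Qp //.
  by apply: dvdz_mull; rewrite dvdzE.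
apply: eq_bigr => x3 _.
have -> : Gint m n d1 d2 d3 x1 x2 x3 = Qp m (d3%:Z * x3%:Z) + c by rewrite /Gint /c; ring.
by [].
Qed.

Lemma Gint_swap23 m n d1 d2 d3 x1 x2 x3 :
  Gint m n d1 d2 d3 x1 x2 x3 = Gint m n d1 d3 d2 x1 x3 x2.
Proof. by rewrite /Gint; ring. Qed.

Lemma Gint_swap12 m n d1 d2 d3 x1 x2 x3 :
  Gint m n d1 d2 d3 x1 x2 x3 = Gint m n d2 d1 d3 x2 x1 x3.
Proof. by rewrite /Gint; ring. Qed.

Lemma cntG_swap23 m n p s t d1 d2 d3 :
  cntG m n p s t d1 d2 d3 = cntG m n p s t d1 d3 d2.
Proof.
rewrite /cntG; apply: eq_bigr => x1 _; rewrite exchange_big /=.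
apply: eq_bigr => x2 _; apply: eq_bigr => x3 _.
by rewrite Gint_swap23.
Qed.

Lemma cntG_swap12 m n p s t d1 d2 d3 :
  cntG m n p s t d1 d2 d3 = cntG m n p s t d2 d1 d3.
Proof.
rewrite /cntG exchange_big /=.
apply: eq_bigr => x1 _; apply: eq_bigr => x2 _; apply: eq_bigr => x3 _.
by rewrite Gint_swap12.
Qed.

Lemma cop2 p : prime p -> odd p -> coprime p 2.
Proof.
move=> pr op; rewrite prime_coprime //; apply/negP => /(@dvdn_leq p 2 isT) h.
have := prime_gt1 pr; move: op; case: p {pr} h => [|[|[|]]] //.
Qed.

Lemma cnt_main m n p s t d1 d2 d3 e : prime p -> odd p -> (p %| m - 2)%N -> (3 <= m)%N ->
  (0 < d1)%N -> (0 < d2)%N -> (0 < d3)%N ->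
  e = minn (logn p d1) (minn (logn p d2) (logn p d3)) ->
  (e <= s)%N -> (s <= t)%N ->
  cntG m n p s t d1 d2 d3 =
    if (p ^ e %| n)%N then (p ^ t * (p ^ t * p ^ (t - s + e)))%N else 0%N.
Proof.
move=> pr op pm m3 d10 d20 d30 eE es st.
case: ifP => hn.
  case: (leqP (logn p d3) (logn p d1)) => h31; case: (leqP (logn p d3) (logn p d2)) => h32.
  - have ee : e = logn p d3 by rewrite eE; lia.
    move: hn es; rewrite ee => hn es; exact: cnt_min3.
  - have ee : e = logn p d2 by rewrite eE; lia.
    move: hn es; rewrite ee => hn es; rewrite cntG_swap23; apply: cnt_min3 => //; lia.
  - have ee : e = logn p d1 by rewrite eE; lia.
    move: hn es; rewrite ee => hn es; rewrite cntG_swap12 cntG_swap23; apply: cnt_min3 => //; lia.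
  - case: (leqP (logn p d2) (logn p d1)) => h21.
    + have ee : e = logn p d2 by rewrite eE; lia.
      move: hn es; rewrite ee => hn es; rewrite cntG_swap23; apply: cnt_min3 => //; lia.
    + have ee : e = logn p d1 by rewrite eE; lia.
      move: hn es; rewrite ee => hn es; rewrite cntG_swap12 cntG_swap23; apply: cnt_min3 => //; lia.
rewrite /cntG big1 // => x1 _; rewrite big1 // => x2 _; rewrite big1 // => x3 _.
apply/eqP; rewrite eqb0; apply/negP => H.
have He : ((p ^ e)%N%:Z %| Gint m n d1 d2 d3 x1 x2 x3)%Z.
  by apply: dvdz_trans H; rewrite dvdzE /= dvdn_exp2l.
have : ((p ^ e)%N%:Z %| (Qp m (d1%:Z * x1%:Z) + Qp m (d2%:Z * x2%:Z) + Qp m (d3%:Z * x3%:Z))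
          - Gint m n d1 d2 d3 x1 x2 x3)%Z.
  have h1 : ((p ^ e)%N%:Z %| Qp m (d1%:Z * x1%:Z))%Z by apply: dvd_Qp => //; rewrite eE; move: (logn p d1) (logn p d2) (logn p d3) => a b c; clear; lia.
  have h2 : ((p ^ e)%N%:Z %| Qp m (d2%:Z * x2%:Z))%Z by apply: dvd_Qp => //; rewrite eE; move: (logn p d1) (logn p d2) (logn p d3) => a b c; clear; lia.
  have h3 : ((p ^ e)%N%:Z %| Qp m (d3%:Z * x3%:Z))%Z by apply: dvd_Qp => //; rewrite eE; move: (logn p d1) (logn p d2) (logn p d3) => a b c; clear; lia.
  exact: (rpredB (rpredD (rpredD h1 h2) h3) He).
have -> : (Qp m (d1%:Z * x1%:Z) + Qp m (d2%:Z * x2%:Z) + Qp m (d3%:Z * x3%:Z))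
          - Gint m n d1 d2 d3 x1 x2 x3 = (2 * n)%N%:Z by rewrite /Gint PoszM; ring.
rewrite dvdzE /= Gauss_dvdr ?hn //.
by apply: coprimeXl; apply: cop2.
Qed.

Local Open Scope complex_scope.

Definition Ec {R : realType} (y : R) : R[i] := (cos (2 * pi * y) -i* sin (2 * pi * y))%C.

Lemma EcD (R : realType) (x y : R) : Ec (x + y) = Ec x * Ec y.
Proof.
rewrite /Ec mulrDr cosD sinD.
rewrite -[(_ +i* _) * (_ +i* _)]/(_ +i* _).
congr (Complex _ _); ring.
Qed.

Lemma Ec0 (R : realType) : Ec (0 : R) = 1.
Proof. by rewrite /Ec mulr0 cos0 sin0 oppr0. Qed.

Lemma EcMn (R : realType) (x : R) k : Ec (x *+ k) = Ec x ^+ k.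
Proof.
elim: k => [|k IH]; first by rewrite mulr0n Ec0 expr0.
by rewrite mulrS EcD IH exprS.
Qed.

Lemma Ec_addn (R : realType) (y : R) (k : nat) : Ec (y + k%:R) = Ec y.
Proof.
rewrite /Ec.
have -> : 2 * pi * (y + k%:R) = 2 * pi * y + (pi *+ 2) *+ k :> R.
  by rewrite -[(pi *+ 2) *+ k]mulr_natr -[pi *+ 2]mulr_natr; ring.
by rewrite (periodicn (@cosD2pi R)) (periodicn (@sinD2pi R)).
Qed.

Lemma Ec_int (R : realType) (y : R) (K : int) : Ec (y + K%:~R) = Ec y.
Proof.
case: K => k; first by rewrite Ec_addn.
rewrite NegzE intrN -[in RHS](subrK (k.+1%:R) y) Ec_addn.
by [].
Qed.

Lemma cos_eq1_contra (R : realType) (x : R) : 0 < x < 1 -> cos (2 * pi * x) != 1.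
Proof.
move=> /andP[x0 x1]; apply/eqP => hc.
have h2 : 2 * pi * x = (pi * x) *+ 2 by rewrite -mulr_natl; ring.
move: hc; rewrite h2 cos_mulr2n => hc.
have hc2 : cos (pi * x) ^+ 2 = 1.
  by move: hc; rewrite mulr2n; lra.
have : sin (pi * x) ^+ 2 = 0 by rewrite sin2cos2 hc2 subrr.
move/eqP; rewrite expf_eq0 /= => /eqP hs.
have : 0 < sin (pi * x).
  apply: sin_gt0_pi; apply/andP; split; first by rewrite mulr_gt0 // pi_gt0.
  by rewrite -[X in _ < X]mulr1 ltr_pM2l // pi_gt0.
by rewrite hs; lra.
Qed.

Lemma Ec_ne1 (R : realType) (F : int) (N : nat) : (0 < N)%N -> ~~ (N%:Z %| F)%Z ->
  Ec (F%:~R / N%:R : R) != 1.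
Proof.
move=> N0 ndvd.
have NZ : N%:Z != 0 by rewrite eqz_nat -lt0n.
have r0 : 0 <= (F %% N)%Z by apply: modz_ge0.
have rN : (F %% N)%Z < N%:Z by apply: ltz_pmod; rewrite ltz_nat.
have rn0 : (F %% N)%Z != 0 by apply/eqP => /dvdz_mod0P; apply/negP.
have -> : (F%:~R / N%:R : R) = (F %% N)%Z%:~R / N%:R + (F %/ N)%Z%:~R.
  rewrite {1}(divz_eq F N) intrD intrM addrC mulrDl -mulrA mulfV ?mulr1 //.
  by rewrite pnatr_eq0 -lt0n.
rewrite Ec_int; apply/eqP => /(congr1 (@complex.Re R)) /= /eqP.
apply/negP; apply: cos_eq1_contra.
have NR : (0 : R) < N%:R by rewrite ltr0n.
apply/andP; split.
  by rewrite divr_gt0 // ltr0z lt0r rn0 r0.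
rewrite ltr_pdivrMr // mul1r -[N%:R]/((N%:Z)%:~R : R) ltr_int //.
Qed.

Lemma Ec_intE (R : realType) (K : int) : Ec (K%:~R : R) = 1.
Proof. by rewrite -[K%:~R]add0r Ec_int Ec0. Qed.

Lemma orth (R : realType) (F : int) (N : nat) : (0 < N)%N ->
  \sum_(a < N) Ec ((a%:R / N%:R * F%:~R) : R) = if (N%:Z %| F)%Z then N%:R else 0.
Proof.
move=> N0.
have NR : (N%:R : R) != 0 by rewrite pnatr_eq0 -lt0n.
rewrite (eq_bigr (fun a : 'I_N => Ec (F%:~R / N%:R : R) ^+ a)); last first.
  by move=> a _; rewrite -EcMn; congr Ec; rewrite -[X in _ = X]mulr_natr; ring.
case: ifP => hd.
  case/dvdzP: hd => q ->.
  have -> : ((q * N%:Z)%:~R / N%:R : R) = q%:~R.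
    by rewrite intrM -[(N%:Z)%:~R]/(N%:R : R) mulfK.
  by rewrite Ec_intE (eq_bigr (fun _ => 1)) => [|i _]; rewrite ?expr1n // sumr_const card_ord.
set z := Ec _.
have z1 : z != 1 by apply: Ec_ne1 => //; rewrite hd.
have zN : z ^+ N = 1.
  rewrite /z -EcMn.
  have -> : (F%:~R / N%:R : R) *+ N = F%:~R by rewrite -[X in X = _]mulr_natr mulfVK.
  exact: Ec_intE.
have := subrX1 z N; rewrite zN subrr => /esym /eqP; rewrite mulf_eq0 subr_eq0 (negbTE z1) /=.
by move/eqP.
Qed.

Lemma egcdn1 n : (egcdn 1 n).1 = 1%N.
Proof.
case: egcdnP => // km kn E lt /=; rewrite gcd1n muln1 in E lt.
have kn0 : kn = 0%N by move: lt; clear; case: kn.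
by rewrite E kn0.
Qed.

Lemma ep_frac_eq p t (z : rat) (c : int) : prime p -> z * (p ^ t)%:R = c%:~R ->
  exists K : int, ep_frac p z = z + K%:~R.
Proof.
move=> pr hz.
have e1 : numq z * (p ^ t)%N%:Z = c * denq z.
  apply: (@intr_inj rat); rewrite !intrM numqE -hz -[((p ^ t)%N%:Z)%:~R]/((p ^ t)%:R : rat).
  by rewrite mulrAC.
have hD : (`|denq z| %| p ^ t)%N.
  have e2 := congr1 absz e1; rewrite !abszM /= in e2.
  rewrite -(@Gauss_dvdr _ `|numq z|); last by rewrite coprime_sym coprime_num_den.
  by rewrite e2 dvdn_mull.
case/(dvdn_pfactor _ _ pr): hD => i _ Di.
have dz : denq z = (p ^ i)%N%:Z by rewrite -absz_denq Di.
have pi0 : (0 < p ^ i)%N by rewrite expn_gt0 prime_gt0.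
rewrite /ep_frac /= Di pfactorK // divnn pi0 egcdn1 mulr1.
exists (- (numq z %/ (p ^ i)%N%:Z)%Z).
rewrite -{2}[z]divq_num_den dz.
rewrite {2}(divz_eq (numq z) (p ^ i)%N%:Z).
rewrite intrN !intrD intrM -[((p ^ i)%N%:Z)%:~R]/((p ^ i)%:R : rat).
have : ((p ^ i)%:R : rat) != 0 by rewrite pnatr_eq0 -lt0n.
by move=> h; field.
Qed.


Lemma ep_Ec (R : realType) p t (z : rat) (c : int) : prime p -> z * (p ^ t)%:R = c%:~R ->
  ep R p z = Ec (ratr z).
Proof.
move=> pr hz; have -> : ep R p z = Ec (ratr (ep_frac p z)) by [].
by have [K ->] := ep_frac_eq p t z c pr hz; rewrite rmorphD /= ratr_int Ec_int.
Qed.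

Lemma Fval_eq m n d1 d2 d3 x1 x2 x3 : (3 <= m)%N ->
  Fval m n d1 d2 d3 x1 x2 x3 = (4 * (m%:Z - 2) * Gint m n d1 d2 d3 x1 x2 x3)%:~R.
Proof.
move=> m3.
have hm : (m%:R - 2 : rat) != 0.
  have : (3%:R <= m%:R :> rat) by rewrite ler_nat.
  move=> h; apply/eqP => h2; move: h; rewrite -[m%:R](subrK 2) h2 add0r; lra.
have natZ : forall k : nat, ((k%:Z)%:~R : rat) = k%:R by [].
rewrite /Fval /Qform /nu_coord /hval /Gint /Qp.
rewrite !(intrD, intrM, intrB, intrN) !natZ.
by field.
Qed.


Definition Fint (m n d1 d2 d3 x1 x2 x3 : nat) : int := 4 * (m%:Z - 2) * Gint m n d1 d2 d3 x1 x2 x3.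
Definition cntF (m n p t d1 d2 d3 : nat) : nat :=
  (\sum_(x1 < p ^ t) \sum_(x2 < p ^ t) \sum_(x3 < p ^ t)
     (((p ^ t)%N%:Z %| Fint m n d1 d2 d3 x1 x2 x3)%Z : nat))%N.

Lemma term_eq (R : realType) p m n d1 d2 d3 t (a x1 x2 x3 : nat) : prime p -> (3 <= m)%N ->
  ep R p ((a%:R / (p ^ t)%:R) * Fval m n d1 d2 d3 x1 x2 x3)
  = Ec (a%:R / (p ^ t)%:R * (Fint m n d1 d2 d3 x1 x2 x3)%:~R : R).
Proof.
move=> pr m3.
have N0 : (0 < p ^ t)%N by rewrite expn_gt0 prime_gt0.
rewrite Fval_eq // (@ep_Ec R p t _ (a%:Z * Fint m n d1 d2 d3 x1 x2 x3)) //.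
  congr Ec; rewrite rmorphM /= fmorph_div /= !ratr_nat ratr_int //.
rewrite /Fint !intrM -[(a%:Z)%:~R]/(a%:R : rat).
have : ((p ^ t)%:R : rat) != 0 by rewrite pnatr_eq0 -lt0n.
by move=> h; field.
Qed.

Lemma trunc_eq (R : realType) p m n d1 d2 d3 t : prime p -> (3 <= m)%N ->
  trunc_density R p m n d1 d2 d3 t
  = ((((p ^ (3 * t))%:R : R)^-1 * (p ^ t)%:R * (cntF m n p t d1 d2 d3)%:R)%:C).
Proof.
move=> pr m3.
have N0 : (0 < p ^ t)%N by rewrite expn_gt0 prime_gt0.
rewrite /trunc_density /cntF.
set c := ((p ^ (3 * t))%:R : R)^-1.
rewrite exchange_big natr_sum mulr_sumr rmorph_sum; apply: eq_bigr => x1 _.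
rewrite exchange_big natr_sum mulr_sumr rmorph_sum; apply: eq_bigr => x2 _.
rewrite exchange_big natr_sum mulr_sumr rmorph_sum; apply: eq_bigr => x3 _.
rewrite (eq_bigr (fun a : 'I_(p ^ t) => c%:C * Ec (a%:R / (p ^ t)%:R * (Fint m n d1 d2 d3 x1 x2 x3)%:~R : R))); last first.
  by move=> a _; rewrite term_eq.
rewrite -mulr_sumr orth //.
case: ifP => h.
  by rewrite !rmorphM !rmorph_nat mulr1.
by rewrite mulr0 !rmorphM !rmorph_nat mulr0.
Qed.

Lemma Fdvd m p t k (G : int) : prime p -> odd p -> (3 <= m)%N -> k = logn p (m - 2) ->
  (k <= t)%N ->
  ((p ^ t)%N%:Z %| 4 * (m%:Z - 2) * G)%Z = ((p ^ (t - k))%N%:Z %| G)%Z.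
Proof.
move=> pr op m3 kE kt.
have m20 : (0 < m - 2)%N by lia.
have [M' copM ME] := pfactor_coprime pr m20.
rewrite -kE in ME.
have -> : m%:Z - 2 = (M' * p ^ k)%N%:Z by rewrite m2E -?ME //; lia.
have -> : (p ^ t)%N = (p ^ k * p ^ (t - k))%N by rewrite -expnD subnKC.
have pk0 : (0 < p ^ k)%N by rewrite expn_gt0 prime_gt0.
have -> : 4 * (M' * p ^ k)%N%:Z * G = (p ^ k)%N%:Z * ((4 * M'%:Z) * G) by rewrite PoszM; ring.
rewrite PoszM dvdz_mul2l; last by lia.
rewrite Gauss_dvdzr // coprimezE abszM /= coprimeXl // coprimeMr copM andbT.
have : coprime p (2 * 2) by rewrite coprimeMr cop2.
by [].
Qed.

Lemma cntF_G m n p t k d1 d2 d3 : prime p -> odd p -> (3 <= m)%N -> k = logn p (m - 2) ->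
  (k <= t)%N -> cntF m n p t d1 d2 d3 = cntG m n p (t - k) t d1 d2 d3.
Proof.
move=> pr op m3 kE kt; rewrite /cntF /cntG.
apply: eq_bigr => x1 _; apply: eq_bigr => x2 _; apply: eq_bigr => x3 _.
by rewrite /Fint (@Fdvd m p t k).
Qed.

Local Close Scope complex_scope.

Theorem lemma3p4 (R : realType) (m n d1 d2 d3 p : nat) :
  (3 <= m)%N -> odd m ->
  (0 < d1)%N -> (0 < d2)%N -> (0 < d3)%N ->
  prime p -> odd p -> (p %| m - 2)%N ->
  @density_is R p m n d1 d2 d3
    (if (p ^ logn p (gcdn (gcdn d1 d2) d3) %| n)%N
     then ((p ^ (logn p (m - 2) + minn (logn p d1) (minn (logn p d2) (logn p d3))))%:R : complex R)
     else 0).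
Proof.
move=> m3 om d10 d20 d30 pr op pm.
have ge : logn p (gcdn (gcdn d1 d2) d3) = minn (logn p d1) (minn (logn p d2) (logn p d3)).
  by rewrite logn_gcd ?gcdn_gt0 ?d10 // logn_gcd // minnA.
rewrite ge.
move eE0 : (minn (logn p d1) (minn (logn p d2) (logn p d3))) => e.
have eE := esym eE0.
move kE0 : (logn p (m - 2)) => k.
have kE := esym kE0.
have key : forall t, (k + e <= t)%N -> trunc_density R p m n d1 d2 d3 t =
    (if (p ^ e %| n)%N then ((p ^ (k + e))%:R : complex R) else 0).
  move=> t ht.
  rewrite trunc_eq // (@cntF_G m n p t k) //; last by lia.
  rewrite (@cnt_main m n p (t - k) t d1 d2 d3 e) //; [|lia|lia].
  case: ifP => hn.
    have -> : (t - (t - k) + e)%N = (k + e)%N by lia.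
    rewrite -(rmorph_nat (real_complex R)); congr (_ %:C)%C.
    have -> : (p ^ (3 * t))%N = (p ^ t * (p ^ t * p ^ t))%N by rewrite -!expnD; congr (p ^ _)%N; lia.
    have : ((p ^ t)%:R : R) != 0 by rewrite pnatr_eq0 -lt0n expn_gt0 prime_gt0.
    by move=> h; rewrite !natrM; field.
  by rewrite mulr0 rmorph0.
rewrite /density_is.
split; apply: cvg_near_cst; exists (k + e)%N => // t /= ht; by rewrite key.
Qed.
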